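(* Let $k$ be an infinite Brauer field and let $d\ge 1$ be an integer that is not a multiple of the characteristic of $k$. There exists a constant $C(d)$ (depending on $d$ and $k$) such that every equation $a_1x_1^d+\cdots+a_nx_n^d=1$ with $a_1,\ldots,a_n\in k$ all nonzero and $n\ge C(d)$ has a solution $(x_1,\ldots,x_n)\in k^n$.
   Context: A field $k$ is a Brauer field if for every $d\ge 1$ there is a number $N_k(d)$ such that every equation $b_1y_1^d+\cdots+b_my_m^d=0$ with $m>N_k(d)$ and $b_i\in k$ has a non-trivial solution in $k^m$. *)

(* Defs.v *)
From mathcomp Require Import all_boot all_order all_algebra.
Set Implicit Arguments. Unset Strict Implicit. Unset Printing Implicit Defensive.
Import GRing.Theory.
Local Open Scope ring_scope.

Definition brauer_field (k : fieldType) : Prop :=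
  forall d : nat, (1 <= d)%N ->
    exists N : nat, forall (m : nat) (b : 'I_m -> k), (N < m)%N ->
      exists y : 'I_m -> k, (exists i, y i != 0) /\
        \sum_(i < m) b i * y i ^+ d = 0.

Definition infinite_field (k : fieldType) : Prop :=
  ~ (exists s : seq k, forall x : k, x \in s).

(* Main.v *)
Require Import Defs.
From mathcomp Require Import all_boot all_order all_algebra.
From mathcomp Require Import ring zify.
From Stdlib Require Import Classical.
Import GRing.Theory.
Local Open Scope ring_scope.

Lemma exists_nonroot {k : fieldType} (hinf : infinite_field k) (q : {poly k}) :
  q != 0 -> exists x, q.[x] != 0.
Proof.
move=> q0; apply: NNPP => hall.
have allr : forall x, q.[x] = 0.
  move=> x; apply: NNPP => hx; apply: hall; exists x; exact/eqP.
have hs : forall n, exists s : seq k, uniq s /\ size s = n.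
  elim=> [|n [s [us ss]]]; first by exists [::].
  have [x hx] : exists x, x \notin s.
    apply: NNPP => hn; apply: hinf; exists s => x.
    by apply: NNPP => hx; apply: hn; exists x; apply/negP.
  by exists (x :: s); rewrite /= hx us ss.
have [s [us ss]] := hs (size q).
have hal : all (root q) s by apply/allP => x _; rewrite /root allr.
by have := max_poly_roots q0 hal us; rewrite ss ltnn.
Qed.

Definition scalep {k : fieldType} (c : k) (g : {poly k}) : {poly k} :=
  \poly_(i < size g) (g`_i * c ^+ i).

Lemma scalepE {k : fieldType} (c : k) g x : (scalep c g).[x] = g.[c * x].
Proof.
rewrite /scalep horner_poly horner_coef; apply: eq_bigr => i _.
by rewrite exprMn mulrA.
Qed.

Lemma coef_scalep {k : fieldType} (c : k) g i : (scalep c g)`_i = g`_i * c ^+ i.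
Proof.
rewrite coef_poly; case: ifP => // /negbT; rewrite -leqNgt => h.
by rewrite nth_default // mul0r.
Qed.

Lemma sum_blocks {k : fieldType} (F : nat -> k) lo M c :
  \sum_(lo <= i < lo + c * M) F i =
  \sum_(b < c) \sum_(lo + b * M <= i < lo + b * M + M) F i.
Proof.
elim: c => [|c IH]; first by rewrite mul0n addn0 big_geq // big_ord0.
rewrite big_ord_recr /= -IH mulSnr addnA.
by apply: big_cat_nat; rewrite leq_addr.
Qed.

Lemma stepT {k : fieldType} (hinf : infinite_field k) (d N : nat) (hd : (1 <= d)%N)
  (hdk : d%:R != 0 :> k)
  (hN : forall (m : nat) (b : 'I_m -> k), (N < m)%N -> exists y : 'I_m -> k,
        (exists i, y i != 0) /\ \sum_(i < m) b i * y i ^+ d = 0) :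
  forall j, (j < d)%N -> forall (a : nat -> k) (lo : nat),
   (forall i, (lo <= i < lo + N.+1 ^ j)%N -> a i != 0) ->
   exists g : {poly k}, (size g <= (d - j).+1)%N /\ g`_1 != 0 /\
     exists p r : nat -> k, forall x,
       \sum_(lo <= i < lo + N.+1 ^ j) a i * (p i + x * r i) ^+ d = g.[x].
Proof.
elim=> [|j IH] hj a lo ha.
  exists (a lo *: ('X + 1) ^+ d); split.
    rewrite subn0; apply: leq_trans (size_scale_leq _ _) _.
    apply: leq_trans (size_poly_exp_leq _ _) _.
    by rewrite -polyC1 size_XaddC mul1n.
  split.
    rewrite coefZ exprD1n coef_sum.
    rewrite (bigD1 (inord 1)) //= big1 ?addr0.
      rewrite coefMn coefXn inordK ?ltnS // eqxx bin1 mulf_neq0 //.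
        by apply: ha; rewrite expn0 addn1 leqnn ltnSn.
    move=> i hi; rewrite coefMn coefXn.
    case: eqP => [h|]; last by rewrite mul0rn.
    by case/negP: hi; apply/eqP/val_inj; rewrite /= inordK // -h.
  exists (fun _ => 1), (fun _ => 1) => x.
  rewrite expn0 addn1 big_nat1 hornerZ horner_exp hornerD hornerX hornerC.
  by rewrite mulr1 addrC.

have hjd : (j < d)%N := ltnW hj.
set M := (N.+1 ^ j)%N.
have hM : (0 < M)%N by rewrite expn_gt0.
have hblk : forall b : 'I_N.+1, exists t : {poly k} * ((nat -> k) * (nat -> k)),
   (size t.1 <= (d - j).+1)%N /\ t.1`_1 != 0 /\ forall x,
     \sum_((lo + b * M)%N <= i < (lo + b * M + M)%N) a i * (t.2.1 i + x * t.2.2 i) ^+ d = t.1.[x].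
  move=> b; have [|g [h1 [h2 [p [r h3]]]]] := IH hjd a (lo + b * M)%N.
    move=> i /andP [h1 h2]; apply: ha; rewrite expnS -/M.
    have hb : (b.+1 * M <= N.+1 * M)%N by rewrite leq_mul2r ltn_ord orbT.
    rewrite mulSn in hb.
    apply/andP; split; first by apply: leq_trans h1; rewrite leq_addr.
    apply: (leq_trans h2); rewrite -addnA leq_add2l addnC; done.
  by exists (g, (p, r)).
have [t ht] := fin_all_exists hblk.
have [s [[b0 hs0] hsum]] := hN N.+1 (fun b => (t b).1`_(d - j)) (ltnSn N).
pose h b := (t b).1`_1.
pose c0 := s b0 ^+ d * h b0.
pose R := \sum_(b < N.+1 | b != b0) s b ^+ d * h b.
pose Q := c0 *: 'X^((d - j) * d) + R *: 'X^d.
have hc0 : c0 != 0.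
  have [_ [hh _]] := ht b0.
  by rewrite mulf_neq0 ?expf_neq0.
have hQ : Q != 0.
  apply/eqP => /(congr1 (fun q : {poly k} => q`_((d - j) * d))).
  rewrite coef0 coefD !coefZ !coefXn eqxx.
  have -> : ((d - j) * d == d)%N = false.
    apply/negbTE/eqP => e.
    have : (2 * d <= (d - j) * d)%N by rewrite leq_mul2r; apply/orP; right; lia.
    lia.
  by rewrite mulr0 addr0 mulr1 => /eqP; rewrite (negbTE hc0).
have [tau htau] := exists_nonroot hinf _ hQ.
pose u b := s b * (if b == b0 then tau ^+ (d - j) else 1).
pose al b := if b == b0 then 1 else tau ^+ d.
pose bl i : 'I_N.+1 := inord ((i - lo) %/ M).
exists (\sum_(b < N.+1) (u b ^+ d) *: scalep (al b) (t b).1).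
split.
  apply/leq_sizeP => i hi; rewrite coef_sum.
  have hdj : ((d - j.+1).+1 = d - j)%N by lia.
  rewrite hdj in hi.
  case: (ltngtP i (d - j)) => hij; first by lia.
    apply: big1 => b _; rewrite coefZ coef_scalep.
    have [h1 _] := ht b; move/leq_sizeP: h1 => ->; first by rewrite mul0r mulr0.
    by [].
  rewrite hij (eq_bigr (fun b => tau ^+ ((d - j) * d) * ((t b).1`_(d - j) * s b ^+ d))).
    by rewrite -mulr_sumr hsum mulr0.
  move=> b _; rewrite coefZ coef_scalep /u /al.
  case: eqP => _.
    by rewrite expr1n mulr1 exprMn -exprM; ring.
  by rewrite mulr1 -exprM (mulnC d); ring.
split.
  rewrite coef_sum.
  suff -> : \sum_(b < N.+1) (u b ^+ d *: scalep (al b) (t b).1)`_1 = Q.[tau] by [].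
  rewrite (bigD1 b0) //= /Q hornerD !hornerZ !hornerXn.
  congr (_ + _).
    by rewrite coefZ coef_scalep /u /al eqxx expr1n !mulr1 exprMn -exprM /c0 /h; ring.
  rewrite /R mulr_suml; apply: eq_bigr => b hb.
  by rewrite coefZ coef_scalep /u /al (negbTE hb) /h mulr1 expr1; ring.
exists (fun i => u (bl i) * (t (bl i)).2.1 i),
       (fun i => u (bl i) * al (bl i) * (t (bl i)).2.2 i) => x.
rewrite expnS sum_blocks horner_sum; apply: eq_bigr => b _.
have [_ [_ h3]] := ht b.
rewrite hornerZ scalepE -h3 mulr_sumr; apply: eq_big_nat => i /andP [h1 h2].
have -> : bl i = b.
  apply/val_inj; rewrite /bl /=.
  have e : ((i - lo) %/ M = b)%N.
    have -> : (i - lo = b * M + (i - lo - b * M))%N by lia.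
    by rewrite divnMDl // divn_small ?addn0 //; lia.
  by rewrite e inordK.
have -> : forall U A P Rr : k, U * P + x * (U * A * Rr) = U * (P + A * x * Rr).
  by move=> *; ring.
by rewrite exprMn mulrCA.
Qed.

Theorem corollary1p5 (k : fieldType) (hinf : infinite_field k)
  (hbr : brauer_field k) (d : nat) (hd : (1 <= d)%N)
  (hchar : forall p : nat, p \in [pchar k] -> ~~ (p %| d)%N) :
  exists C : nat, forall (n : nat) (a : 'I_n -> k),
    (C <= n)%N -> (forall i, a i != 0) ->
    exists x : 'I_n -> k, \sum_(i < n) a i * x i ^+ d = 1.
Proof.
have hdk : d%:R != 0 :> k.
  apply/negP => hd0; have [p hp] := natf0_pchar hd hd0.
  by have := hchar p hp; rewrite (dvdn_pcharf hp) hd0.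
have [N hN] := hbr d hd.
exists (N.+1 ^ d.-1)%N => n a hn ha.
pose A (i : nat) := if insub i is Some j then a (j : 'I_n) else 1.
have hA : forall i, A i != 0 by move=> i; rewrite /A; case: insub => //; exact: oner_neq0.
have hd1 : (d.-1 < d)%N by rewrite prednK.
have [g [hs [hg1 [p [r hpr]]]]] := stepT hinf d N hd hdk hN _ hd1 A 0 (fun i _ => hA i).
have hg : forall x, g.[x] = g`_0 + g`_1 * x.
  move=> x; rewrite (horner_coef_wide x (_ : size g <= 2)%N).
    by rewrite !big_ord_recl big_ord0 /= expr0 mulr1 expr1 addr0.
  by apply: leq_trans hs _; rewrite -subn1 subKn.
pose x0 := (1 - g`_0) / g`_1.
have hx0 : g.[x0] = 1 by rewrite hg /x0 mulrC divfK // addrC subrK.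
exists (fun i => if (i < N.+1 ^ d.-1)%N then p i + x0 * r i else 0).
rewrite -hx0 -hpr add0n.
pose F i := A i * (if (i < N.+1 ^ d.-1)%N then p i + x0 * r i else 0) ^+ d.
transitivity (\sum_(0 <= i < n) F i).
  by rewrite big_mkord; apply: eq_bigr => i _; rewrite /F /A valK.
rewrite (@big_cat_nat _ _ _ (N.+1 ^ d.-1)%N) //= [X in _ + X]big1_seq ?addr0.
  by apply: eq_big_nat => i /andP [_ hi]; rewrite /F hi.
move=> i /andP [_]; rewrite mem_index_iota => /andP [hi _].
by rewrite /F leqNgt in hi *; rewrite (negbTE hi) expr0n eqn0Ngt hd mulr0.
Qed.
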